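(* Let $A<\mathbb{R}$ be any subring. Then the group $H(A)$ is inner amenable, i.e. there is a mean on $H(A)\setminus\{e\}$ invariant under conjugation by $H(A)$.
   Context: Let $\mathbb{P}^1=\mathbb{P}^1(\mathbb{R})$ with its usual topology (a circle) and the natural action of $\mathrm{PSL}_2(\mathbb{R})$. Let $G$ be the group of homeomorphisms of $\mathbb{P}^1$ which are piecewise in $\mathrm{PSL}_2(\mathbb{R})$ with finitely many pieces, each an interval. Let $\infty\in\mathbb{P}^1$ correspond to the first basis vector of $\mathbb{R}^2$ and $H<G$ its stabilizer. For a subring $A<\mathbb{R}$, $P_A$ is the set of fixed points of hyperbolic elements of $\mathrm{PSL}_2(A)$, $G(A)$ is the subgroup of $G$ of elements piecewise in $\mathrm{PSL}_2(A)$ with all interval endpoints in $P_A$, and $H(A)=G(A)\cap H$. *)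

(* Defs.v *)
From Stdlib Require Import Reals.
Open Scope R_scope.

(** The real projective line P^1(R): [Some x] is the point [x:1],
    [None] is infinity = [1:0] (the line of the first basis vector). *)
Definition P1 := option R.
Definition infty : P1 := None.

Definition mob (a b c d : R) (p : P1) : P1 :=
  match p with
  | Some x => if Req_EM_T (c * x + d) 0 then None
              else Some ((a * x + b) / (c * x + d))
  | None => if Req_EM_T c 0 then None else Some (a / c)
  end.

Definition nbhd (p : P1) (e : R) : P1 -> Prop :=
  match p with
  | Some x => fun q => match q with Some y => Rabs (y - x) < e | None => False end
  | None => fun q => match q with None => True | Some y => Rabs y > / e end
  end.

Definition p1_continuous (f : P1 -> P1) : Prop :=
  forall p e, 0 < e -> exists d, 0 < d /\ forall q, nbhd p d q -> nbhd (f p) e (f q).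

Definition homeomorphism (f : P1 -> P1) : Prop :=
  exists g : P1 -> P1, (forall p, g (f p) = p) /\ (forall p, f (g p) = p) /\
    p1_continuous f /\ p1_continuous g.

Definition p1_closure (S : P1 -> Prop) (p : P1) : Prop :=
  forall e, 0 < e -> exists q, nbhd p e q /\ S q.
Definition p1_interior (S : P1 -> Prop) (p : P1) : Prop :=
  exists e, 0 < e /\ forall q, nbhd p e q -> S q.
(** Endpoints of an interval = its topological boundary in P^1. *)
Definition endpoint (S : P1 -> Prop) (p : P1) : Prop :=
  p1_closure S p /\ ~ p1_interior S p.

Definition convex (X : R -> Prop) : Prop :=
  forall x y z, X x -> X z -> x <= y <= z -> X y.

(** Intervals (arcs, i.e. connected subsets) of the circle P^1: either an
    interval of R not containing infinity, or a set containing infinity whose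
    complement in P^1 is an interval of R. *)
Definition arc (S : P1 -> Prop) : Prop :=
  (~ S None /\ convex (fun x => S (Some x))) \/
  (S None /\ convex (fun x => ~ S (Some x))).

Definition subring (A : R -> Prop) : Prop :=
  A 0 /\ A 1 /\ (forall x y, A x -> A y -> A (x + y)) /\
  (forall x, A x -> A (- x)) /\ (forall x y, A x -> A y -> A (x * y)).

(** (a b; c d) in SL_2(A); its image in PSL_2(A) acts by [mob a b c d]. *)
Definition in_SL2 (A : R -> Prop) (a b c d : R) : Prop :=
  A a /\ A b /\ A c /\ A d /\ a * d - b * c = 1.

Definition P_ (A : R -> Prop) (p : P1) : Prop :=
  exists a b c d, in_SL2 A a b c d /\ Rabs (a + d) > 2 /\ mob a b c d p = p.

Definition G_ (A : R -> Prop) (f : P1 -> P1) : Prop :=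
  homeomorphism f /\
  exists (n : nat) (I : nat -> P1 -> Prop) (a b c d : nat -> R),
    (forall i, (i < n)%nat ->
       arc (I i) /\ in_SL2 A (a i) (b i) (c i) (d i) /\
       (forall p, I i p -> f p = mob (a i) (b i) (c i) (d i) p) /\
       (forall p, endpoint (I i) p -> P_ A p)) /\
    (forall i j p, (i < n)%nat -> (j < n)%nat -> I i p -> I j p -> i = j) /\
    (forall p, exists i, (i < n)%nat /\ I i p).

Definition H_ (A : R -> Prop) (f : P1 -> P1) : Prop := G_ A f /\ f infty = infty.

(** Conjugate set g E g^{-1} = { h | h ∘ g = g ∘ k for some k in E }. *)
Definition conj_set (g : P1 -> P1) (E : (P1 -> P1) -> Prop) : (P1 -> P1) -> Prop :=
  fun h => exists k, E k /\ forall p, h (g p) = g (k p).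

Definition inner_amenable (Gam : (P1 -> P1) -> Prop) : Prop :=
  let D := fun h => Gam h /\ exists p, h p <> p in
  exists m : ((P1 -> P1) -> Prop) -> R,
    (forall E, (forall h, E h -> D h) -> 0 <= m E) /\
    m D = 1 /\
    (forall E F, (forall h, E h -> D h) -> (forall h, F h -> D h) ->
       (forall h, E h -> F h -> False) ->
       m (fun h => E h \/ F h) = m E + m F) /\
    (forall g E, Gam g -> (forall h, E h -> D h) -> m (conj_set g E) = m E).

(* Main.v *)
Require Import Defs.
From Stdlib Require Import Reals.
From Stdlib Require Import Lra Psatz Classical FunctionalExtensionality List ClassicalDescription ZArith IndefiniteDescription.
From mathcomp Require classical_sets filter.
Import ListNotations.
Open Scope R_scope.

Definition s5 := sqrt 5.
Definition p0 := (3 - s5) / 2.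
Definition q0 := (3 + s5) / 2.

Lemma s5_sq : s5 * s5 = 5.
Proof. unfold s5. apply sqrt_sqrt. lra. Qed.
Lemma s5_pos : 0 <= s5.
Proof. unfold s5. apply sqrt_pos. Qed.
Lemma s5_bounds : 2 < s5 < 3.
Proof. pose proof s5_sq; pose proof s5_pos; split; nra. Qed.
Lemma pq1 : p0 * q0 = 1.
Proof. unfold p0, q0. pose proof s5_sq. nra. Qed.
Lemma pq3 : p0 + q0 = 3.
Proof. unfold p0, q0. lra. Qed.
Lemma p0_pos : 0 < p0.
Proof. unfold p0. pose proof s5_bounds. lra. Qed.
Lemma p0_lt1 : p0 < 1.
Proof. unfold p0. pose proof s5_bounds. lra. Qed.
Lemma q0_gt1 : 1 < q0.
Proof. unfold q0. pose proof s5_bounds. lra. Qed.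
Lemma inv_p0 : / p0 = q0.
Proof. pose proof pq1; pose proof p0_pos. field_simplify_eq; lra. Qed.
Lemma inv_q0 : / q0 = p0.
Proof. pose proof pq1; pose proof q0_gt1. field_simplify_eq; lra. Qed.

Definition clamp (y : R) := Rmax p0 (Rmin y q0).
Definition bump (y : R) := y - clamp y + (3 - / clamp y).
Definition bumpi (y : R) := y - clamp y + / (3 - clamp y).

Lemma clamp_in y : p0 <= y <= q0 -> clamp y = y.
Proof. intros [H1 H2]. unfold clamp. rewrite Rmin_left by lra. rewrite Rmax_right; lra. Qed.
Lemma clamp_hi y : q0 <= y -> clamp y = q0.
Proof. intros H. unfold clamp. rewrite Rmin_right by lra. rewrite Rmax_right; pose proof p0_lt1; pose proof q0_gt1; lra. Qed.
Lemma clamp_lo y : y <= p0 -> clamp y = p0.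
Proof. intros H. unfold clamp. rewrite Rmin_left by (pose proof p0_lt1; pose proof q0_gt1; lra). rewrite Rmax_left; lra. Qed.
Lemma clamp_range y : p0 <= clamp y <= q0.
Proof. pose proof p0_lt1; pose proof q0_gt1.
  destruct (Rle_dec y p0). rewrite clamp_lo; lra.
  destruct (Rle_dec q0 y). rewrite clamp_hi; lra. rewrite clamp_in; lra. Qed.
Lemma clamp_cases y : (y <= p0 /\ clamp y = p0) \/ (q0 <= y /\ clamp y = q0) \/ (p0 <= y <= q0 /\ clamp y = y).
Proof. pose proof p0_lt1; pose proof q0_gt1.
  destruct (Rle_dec y p0). left; split; [lra|apply clamp_lo; lra].
  destruct (Rle_dec q0 y). right; left; split; [lra|apply clamp_hi; lra].
  right; right; split; [lra|apply clamp_in; lra]. Qed.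
Lemma clamp_lip y z : Rabs (clamp y - clamp z) <= Rabs (y - z).
Proof. pose proof p0_lt1; pose proof q0_gt1.
  destruct (clamp_cases y) as [[H1 H2]|[[H1 H2]|[H1 H2]]]; rewrite H2;
  destruct (clamp_cases z) as [[H3 H4]|[[H3 H4]|[H3 H4]]]; rewrite H4;
  unfold Rabs; repeat destruct Rcase_abs; lra. Qed.

Lemma bump_out y : ~ (p0 <= y <= q0) -> bump y = y.
Proof. intros H. pose proof p0_lt1; pose proof q0_gt1. unfold bump.
  destruct (Rle_dec y p0).
  - rewrite clamp_lo by lra. rewrite inv_p0. pose proof pq3. lra.
  - rewrite clamp_hi by lra. rewrite inv_q0. pose proof pq3. lra. Qed.
Lemma bumpi_out y : ~ (p0 <= y <= q0) -> bumpi y = y.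
Proof. intros H. pose proof p0_lt1; pose proof q0_gt1. unfold bumpi. pose proof pq3.
  destruct (Rle_dec y p0).
  - rewrite clamp_lo by lra. replace (3 - p0) with q0 by lra. rewrite inv_q0. lra.
  - rewrite clamp_hi by lra. replace (3 - q0) with p0 by lra. rewrite inv_p0. lra. Qed.
Lemma bump_in y : p0 <= y <= q0 -> bump y = 3 - / y.
Proof. intros H. unfold bump. rewrite clamp_in by lra. lra. Qed.
Lemma bumpi_in y : p0 <= y <= q0 -> bumpi y = / (3 - y).
Proof. intros H. unfold bumpi. rewrite clamp_in by lra. lra. Qed.

Lemma bump_in_range y : p0 <= y <= q0 -> p0 <= 3 - / y <= q0.
Proof. intros H. pose proof p0_pos. pose proof pq3. pose proof pq1.
  assert (0 < y) by lra.
  assert (/ y <= q0). { rewrite <- inv_p0. apply Rinv_le_contravar; lra. }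
  assert (p0 <= / y). { rewrite <- inv_q0. apply Rinv_le_contravar; lra. }
  lra. Qed.
Lemma bumpi_in_range y : p0 <= y <= q0 -> p0 <= / (3 - y) <= q0.
Proof. intros H. pose proof p0_pos. pose proof pq3.
  assert (p0 <= 3 - y <= q0) by lra.
  split.
  - rewrite <- inv_q0. apply Rinv_le_contravar; lra.
  - rewrite <- inv_p0. apply Rinv_le_contravar; lra. Qed.

Lemma bump_inside y : p0 <= y <= q0 <-> p0 <= bump y <= q0.
Proof. split; intros H.
  - rewrite bump_in by lra. apply bump_in_range; auto.
  - destruct (classic (p0 <= y <= q0)); auto. rewrite bump_out in H; auto. Qed.

Lemma bumpK y : bumpi (bump y) = y.
Proof. destruct (classic (p0 <= y <= q0)) as [H|H].
  - pose proof (bump_in_range y H). rewrite bump_in by auto. rewrite bumpi_in by auto.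
    pose proof p0_pos. replace (3 - (3 - / y)) with (/ y) by ring. apply Rinv_inv.
  - rewrite bump_out by auto. rewrite bumpi_out; auto. Qed.
Lemma bumpiK y : bump (bumpi y) = y.
Proof. destruct (classic (p0 <= y <= q0)) as [H|H].
  - pose proof (bumpi_in_range y H). rewrite bumpi_in by auto. rewrite bump_in by auto.
    rewrite Rinv_inv. ring.
  - rewrite bumpi_out by auto. rewrite bump_out; auto. Qed.

Definition KL := 2 + / (p0 * p0).

Lemma inv_lip u v : p0 <= u -> p0 <= v -> Rabs (/ u - / v) <= / (p0*p0) * Rabs (u - v).
Proof. intros Hu Hv. pose proof p0_pos.
  replace (/ u - / v) with ((v - u) / (u * v)) by (field; lra).
  unfold Rdiv. rewrite Rabs_mult. rewrite Rabs_inv. rewrite <- Rabs_Ropp.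
  replace (- (v - u)) with (u - v) by ring. rewrite Rmult_comm.
  apply Rmult_le_compat_r. apply Rabs_pos.
  rewrite Rabs_right by nra. apply Rinv_le_contravar; nra. Qed.

Lemma bump_lip y z : Rabs (bump y - bump z) <= KL * Rabs (y - z).
Proof. unfold bump, KL.
  pose proof (clamp_lip y z). pose proof (clamp_range y). pose proof (clamp_range z).
  pose proof (inv_lip (clamp y) (clamp z) ltac:(lra) ltac:(lra)).
  pose proof p0_pos. assert (0 <= / (p0*p0)) by (left; apply Rinv_0_lt_compat; nra).
  replace (y - clamp y + (3 - / clamp y) - (z - clamp z + (3 - / clamp z)))
   with ((y - z) - (clamp y - clamp z) - (/ clamp y - / clamp z)) by ring.
  eapply Rle_trans. apply Rabs_triang. eapply Rle_trans. apply Rplus_le_compat_r. apply Rabs_triang.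
  rewrite !Rabs_Ropp. nra. Qed.

Lemma bumpi_lip y z : Rabs (bumpi y - bumpi z) <= KL * Rabs (y - z).
Proof. unfold bumpi, KL.
  pose proof (clamp_lip y z). pose proof (clamp_range y). pose proof (clamp_range z).
  pose proof pq3.
  pose proof (inv_lip (3 - clamp y) (3 - clamp z) ltac:(lra) ltac:(lra)).
  replace (3 - clamp y - (3 - clamp z)) with (- (clamp y - clamp z)) in H3 by ring.
  rewrite Rabs_Ropp in H3.
  pose proof p0_pos. assert (0 <= / (p0*p0)) by (left; apply Rinv_0_lt_compat; nra).
  replace (y - clamp y + / (3 - clamp y) - (z - clamp z + / (3 - clamp z)))
   with ((y - z) - (clamp y - clamp z) + (/ (3 - clamp y) - / (3 - clamp z))) by ring.
  eapply Rle_trans. apply Rabs_triang. eapply Rle_trans. apply Rplus_le_compat_r. apply Rabs_triang.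
  rewrite !Rabs_Ropp. nra. Qed.

Definition liftR (F : R -> R) (p : P1) : P1 :=
  match p with Some x => Some (F x) | None => None end.

Lemma lift_cont (F : R -> R) K B : 0 < K ->
  (forall x y, Rabs (F x - F y) <= K * Rabs (x - y)) ->
  (forall x, B < Rabs x -> F x = x) -> p1_continuous (liftR F).
Proof.
  intros HK HL HB p e He. destruct p as [x|].
  - exists (e / K). split. apply Rdiv_lt_0_compat; lra.
    intros [y|] Hq; simpl in *; [|contradiction].
    eapply Rle_lt_trans. apply HL.
    apply Rmult_lt_reg_l with (/ K). apply Rinv_0_lt_compat; lra.
    rewrite <- Rmult_assoc, Rinv_l, Rmult_1_l by lra.
    unfold Rdiv in Hq. lra.
  - set (M := Rmax B 0 + / e + 1).
    assert (HM : 0 < M). { unfold M. pose proof (Rmax_r B 0). pose proof (Rinv_0_lt_compat e He). lra. }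
    exists (/ M). split. apply Rinv_0_lt_compat; lra.
    intros [y|] Hq; simpl in *; [|exact I].
    rewrite Rinv_inv in Hq.
    rewrite HB. unfold M in Hq. pose proof (Rmax_r B 0). lra.
    unfold M in Hq. pose proof (Rmax_l B 0). pose proof (Rinv_0_lt_compat e He). lra.
Qed.

Definition Phi (a t x : R) := a*a*(bump (x/(a*a) - t) + t).
Definition Phii (a t x : R) := a*a*(bumpi (x/(a*a) - t) + t).
Definition phi a t := liftR (Phi a t).
Definition phii a t := liftR (Phii a t).

Lemma KL_pos : 0 < KL.
Proof. unfold KL. pose proof p0_pos. assert (0 < / (p0*p0)) by (apply Rinv_0_lt_compat; nra). lra. Qed.

Lemma Phi_lipgen (G : R -> R) a t x y : a <> 0 ->
  (forall u v, Rabs (G u - G v) <= KL * Rabs (u - v)) ->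
  Rabs (a*a*(G (x/(a*a) - t) + t) - a*a*(G (y/(a*a) - t) + t)) <= KL * Rabs (x - y).
Proof. intros Ha HG. assert (Haa : 0 < a*a) by nra.
  replace (a*a*(G (x/(a*a) - t) + t) - a*a*(G (y/(a*a) - t) + t))
    with (a*a*(G (x/(a*a) - t) - G (y/(a*a) - t))) by ring.
  rewrite Rabs_mult, (Rabs_right (a*a)) by lra.
  eapply Rle_trans. apply Rmult_le_compat_l. lra. apply HG.
  replace (x / (a*a) - t - (y / (a*a) - t)) with ((x - y) / (a*a)) by (field; lra).
  unfold Rdiv. rewrite Rabs_mult. rewrite Rabs_inv, (Rabs_right (a*a)) by lra.
  right. field. lra. Qed.

Lemma out_far a t x : a <> 0 -> a*a*(q0 + Rabs t) < Rabs x -> ~ (p0 <= x/(a*a) - t <= q0).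
Proof. intros Ha Hx Hin. assert (Haa : 0 < a*a) by nra.
  assert (x = a*a*((x/(a*a) - t) + t)) by (field; lra).
  rewrite H in Hx. rewrite Rabs_mult, (Rabs_right (a*a)) in Hx by lra.
  pose proof (Rabs_triang (x/(a*a) - t) t). rewrite (Rabs_right (x/(a*a) - t)) in H0 by (pose proof p0_pos; lra).
  nra. Qed.

Lemma Phi_out a t x : a <> 0 -> ~ (p0 <= x/(a*a) - t <= q0) -> Phi a t x = x.
Proof. intros Ha H. unfold Phi. rewrite bump_out by auto. field. nra. Qed.
Lemma Phii_out a t x : a <> 0 -> ~ (p0 <= x/(a*a) - t <= q0) -> Phii a t x = x.
Proof. intros Ha H. unfold Phii. rewrite bumpi_out by auto. field. nra. Qed.

Lemma phi_cont a t : a <> 0 -> p1_continuous (phi a t).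
Proof. intros Ha. apply (lift_cont _ KL (a*a*(q0 + Rabs t)) KL_pos).
  - intros; apply Phi_lipgen; auto. apply bump_lip.
  - intros x Hx. apply Phi_out; auto. apply out_far; auto. Qed.
Lemma phii_cont a t : a <> 0 -> p1_continuous (phii a t).
Proof. intros Ha. apply (lift_cont _ KL (a*a*(q0 + Rabs t)) KL_pos).
  - intros; apply Phi_lipgen; auto. apply bumpi_lip.
  - intros x Hx. apply Phii_out; auto. apply out_far; auto. Qed.

Lemma phi_homeo a t : a <> 0 -> homeomorphism (phi a t).
Proof. intros Ha. assert (Haa : a*a <> 0) by nra. exists (phii a t). split; [|split; [|split]].
  - intros [x|]; simpl; auto. f_equal. unfold Phii, Phi.
    replace (a * a * (bump (x / (a * a) - t) + t) / (a * a) - t) with (bump (x / (a * a) - t)) by (field; auto).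
    rewrite bumpK. field. auto.
  - intros [x|]; simpl; auto. f_equal. unfold Phii, Phi.
    replace (a * a * (bumpi (x / (a * a) - t) + t) / (a * a) - t) with (bumpi (x / (a * a) - t)) by (field; auto).
    rewrite bumpiK. field. auto.
  - apply phi_cont; auto.
  - apply phii_cont; auto.
Qed.

Definition unit (A : R -> Prop) (a : R) := A a /\ A (/ a) /\ a <> 0.

Definition inI0 a t (p : P1) : Prop :=
  match p with Some x => p0 <= x/(a*a) - t <= q0 | None => False end.
Definition Ipc a t (i : nat) : P1 -> Prop :=
  match i with O => inI0 a t | _ => fun p => ~ inI0 a t p end.
Definition ma (t : R) (i : nat) := match i with O => 3 + t | _ => 1 end.
Definition mb (a t : R) (i : nat) := match i with O => - (a*a*(t*t+3*t+1)) | _ => 0 end.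
Definition mc (a : R) (i : nat) := match i with O => / a * / a | _ => 0 end.
Definition md (t : R) (i : nat) := match i with O => - t | _ => 1 end.

Lemma sub_three A : subring A -> A 3.
Proof. intros (H0 & H1 & Hp & Hn & Hm). replace 3 with (1 + 1 + 1) by ring. auto. Qed.

Lemma sl2_piece0 A a t : subring A -> unit A a -> A t -> in_SL2 A (ma t 0) (mb a t 0) (mc a 0) (md t 0).
Proof. intros HA (Ha & Hai & Ha0) Ht. pose proof (sub_three A HA) as H3.
  destruct HA as (H0 & H1 & Hp & Hn & Hm). simpl.
  repeat split.
  - apply Hp; auto.
  - repeat first [assumption | apply Hp | apply Hm | apply Hn].
  - apply Hm; auto.
  - apply Hn; auto.
  - field. auto. Qed.

Lemma sl2_piece1 A : subring A -> in_SL2 A 1 0 0 1.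
Proof. intros (H0 & H1 & Hp & Hn & Hm). repeat split; auto. ring. Qed.

Lemma mob_piece0 a t x : a <> 0 -> p0 <= x/(a*a) - t <= q0 ->
  mob (ma t 0) (mb a t 0) (mc a 0) (md t 0) (Some x) = Some (Phi a t x).
Proof. intros Ha Hy. simpl. pose proof p0_pos.
  remember (x/(a*a) - t) as y.
  assert (Hx : x = a*a*(y+t)) by (subst; field; nra).
  assert (Hd : / a * / a * x + - t = y) by (rewrite Hx; field; auto).
  rewrite Hd. destruct (Req_dec_T y 0); [lra|]. f_equal.
  unfold Phi. rewrite <- Heqy. rewrite bump_in by lra. rewrite Hx. field; auto. Qed.

Lemma mob_id x : mob 1 0 0 1 x = x.
Proof. destruct x as [x|]; simpl.
  - destruct (Req_dec_T (0 * x + 1) 0). lra. f_equal. field.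
  - destruct (Req_dec_T 0 0); auto. contradiction. Qed.

Lemma not_endpoint S p : (exists e, 0 < e /\ forall q, nbhd p e q -> S q) \/
  (exists e, 0 < e /\ forall q, nbhd p e q -> ~ S q) -> ~ endpoint S p.
Proof. intros [H|[e [He H]]] [Hc Hi].
  - apply Hi. exact H.
  - destruct (Hc e He) as [q [Hq Sq]]. exact (H q Hq Sq). Qed.

Lemma I0_nbhd a t p : a <> 0 -> ~ (exists x, p = Some x /\ (x/(a*a) - t = p0 \/ x/(a*a) - t = q0)) ->
  (exists e, 0 < e /\ forall q, nbhd p e q -> inI0 a t q) \/
  (exists e, 0 < e /\ forall q, nbhd p e q -> ~ inI0 a t q).
Proof. intros Ha Hp. assert (Haa : 0 < a*a) by nra. pose proof p0_lt1; pose proof q0_gt1.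
  destruct p as [x|].
  - set (y := x/(a*a) - t).
    assert (Hyy : forall x', x'/(a*a) - t - y = (x' - x)/(a*a)) by (intros; unfold y; field; nra).
    assert (Hb : forall x', Rabs (x' - x) < a*a*0 + 0 -> True) by auto.
    destruct (Rlt_le_dec y p0).
    + right. exists (a*a*(p0 - y)). split. nra. intros [x'|] Hq; simpl in *; auto.
      intros [H1 H2]. specialize (Hyy x'). apply Rabs_def2 in Hq. fold y in H1.
      assert ((x' - x)/(a*a) < p0 - y). { apply Rmult_lt_reg_l with (a*a); auto. unfold Rdiv. field_simplify; nra. }
      lra.
    + destruct (Rlt_le_dec q0 y).
      * right. exists (a*a*(y - q0)). split. nra. intros [x'|] Hq; simpl in *; auto.
        intros [H1 H2]. specialize (Hyy x'). apply Rabs_def2 in Hq.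
        assert (- (y - q0) < (x' - x)/(a*a)). { apply Rmult_lt_reg_l with (a*a); auto. unfold Rdiv. field_simplify; nra. }
        lra.
      * assert (p0 < y < q0). { split; destruct (Req_dec y p0); destruct (Req_dec y q0);
          try (exfalso; apply Hp; exists x; split; auto; fail); lra. }
        left. exists (a*a*Rmin (y - p0) (q0 - y)). split. apply Rmult_lt_0_compat; auto. apply Rmin_glb_lt; lra.
        intros [x'|] Hq; simpl in *; [|contradiction]. specialize (Hyy x'). apply Rabs_def2 in Hq.
        pose proof (Rmin_l (y - p0) (q0 - y)). pose proof (Rmin_r (y - p0) (q0 - y)).
        assert (Hm : Rabs ((x' - x)/(a*a)) < Rmin (y - p0) (q0 - y)).
        { unfold Rdiv. rewrite Rabs_mult, Rabs_inv, (Rabs_right (a*a)) by lra.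
          apply Rmult_lt_reg_l with (a*a); auto. field_simplify; try lra. apply Rabs_def1; lra. }
        apply Rabs_def2 in Hm. lra.
  - right. exists (/ (a*a*(q0 + Rabs t) + 1)). split. apply Rinv_0_lt_compat. pose proof (Rabs_pos t). nra.
    intros [x'|] Hq; simpl in *; auto. rewrite Rinv_inv in Hq. apply out_far; auto. lra.
Qed.

Lemma endpoint_Ipc a t i p : a <> 0 -> endpoint (Ipc a t i) p ->
  exists x, p = Some x /\ (x/(a*a) - t = p0 \/ x/(a*a) - t = q0).
Proof. intros Ha He. apply NNPP. intros Hn. destruct (I0_nbhd a t p Ha Hn) as [H|H].
  - destruct i.
    + exact (not_endpoint _ _ (or_introl H) He).
    + refine (not_endpoint (Ipc a t (S i)) p _ He).
      right. destruct H as [e [He1 H]]. exists e. split; [exact He1|]. intros q Hq Hq'. exact (Hq' (H q Hq)).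
  - destruct i.
    + exact (not_endpoint _ _ (or_intror H) He).
    + refine (not_endpoint (Ipc a t (S i)) p _ He).
      left. destruct H as [e [He1 H]]. exists e. split; [exact He1|]. intros q Hq. exact (H q Hq).
Qed.

Lemma H_phi A a t : subring A -> unit A a -> A t -> H_ A (phi a t).
Proof. intros HA Hu Ht. pose proof Hu as (Ha & Hai & Ha0). split; [|reflexivity].
  split. apply phi_homeo; auto.
  exists 2%nat, (Ipc a t), (ma t), (mb a t), (mc a), (md t).
  split; [|split].
  - intros i Hi. destruct i as [|[|i]]; [| |lia].
    + split; [|split; [|split]].
      * left. split. simpl; auto. intros x y z Hx Hz Hxy. simpl in *.
        assert (0 < / (a*a)) by (apply Rinv_0_lt_compat; nra). unfold Rdiv in *.
        split; nra.
      * apply sl2_piece0; auto.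
      * intros [x|] Hp; simpl in Hp; [|contradiction]. rewrite mob_piece0; auto.
      * intros p Hp. destruct (endpoint_Ipc a t 0 p Ha0 Hp) as [x [-> Hx]].
        exists (ma t 0), (mb a t 0), (mc a 0), (md t 0). split. apply sl2_piece0; auto.
        split. simpl. rewrite Rabs_right; lra.
        pose proof p0_lt1; pose proof q0_gt1. rewrite mob_piece0 by (auto; lra).
        f_equal. unfold Phi. rewrite bump_in by lra.
        pose proof pq3. assert (Hx' : x = a*a*((x/(a*a)-t)+t)) by (field; auto).
        destruct Hx as [Hx|Hx]; rewrite Hx in Hx' |- *; rewrite Hx';
        [rewrite inv_p0|rewrite inv_q0]; f_equal; lra.
    + split; [|split; [|split]].
      * right. split. simpl; auto. intros x y z Hx Hz Hxy. simpl in *.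
        apply NNPP in Hx. apply NNPP in Hz.
        assert (0 < / (a*a)) by (apply Rinv_0_lt_compat; nra). unfold Rdiv in *.
        intros Hn; apply Hn. split; nra.
      * apply sl2_piece1; auto.
      * intros p Hp. rewrite mob_id. destruct p as [x|]; simpl; auto. f_equal.
        apply Phi_out; auto.
      * intros p Hp. destruct (endpoint_Ipc a t 1 p Ha0 Hp) as [x [-> Hx]].
        exists (ma t 0), (mb a t 0), (mc a 0), (md t 0). split. apply sl2_piece0; auto.
        split. simpl. rewrite Rabs_right; lra.
        pose proof p0_lt1; pose proof q0_gt1. rewrite mob_piece0 by (auto; lra).
        f_equal. unfold Phi. rewrite bump_in by lra.
        pose proof pq3. assert (Hx' : x = a*a*((x/(a*a)-t)+t)) by (field; auto).
        destruct Hx as [Hx|Hx]; rewrite Hx in Hx' |- *; rewrite Hx';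
        [rewrite inv_p0|rewrite inv_q0]; f_equal; lra.
  - intros i j p Hi Hj Hip Hjp. destruct i as [|[|i]]; destruct j as [|[|j]]; try lia; simpl in *; tauto.
  - intros p. destruct (classic (inI0 a t p)). exists 0%nat; simpl; split; auto; lia.
    exists 1%nat; simpl; split; auto.
Qed.

Lemma phi_moves a t : a <> 0 -> phi a t (Some (a*a*(1+t))) <> Some (a*a*(1+t)).
Proof. intros Ha. simpl. intros H. injection H. unfold Phi.
  replace (a * a * (1 + t) / (a * a) - t) with 1 by (field; auto).
  pose proof p0_lt1; pose proof q0_gt1. rewrite bump_in by lra.
  rewrite Rinv_1. intros H'. assert (a*a*(3 - 1 + t) - a*a*(1+t) = 0) by lra. nra. Qed.

Lemma conv_eventually (X : R -> Prop) : convex X ->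
  (exists M, forall x, M < x -> X x) \/ (exists M, forall x, M < x -> ~ X x).
Proof. intros Hc. destruct (classic (exists M, forall x, M < x -> ~ X x)) as [H|H]; [right; auto|].
  left. assert (Hu : forall M, exists x, M < x /\ X x).
  { intros M. apply NNPP. intros Hn. apply H. exists M. intros x Hx HX. apply Hn. exists x. auto. }
  destruct (Hu 0) as [x0 [_ Hx0]]. exists x0. intros x Hx.
  destruct (Hu x) as [x1 [Hx1 HX1]]. apply (Hc x0 x x1); auto; lra. Qed.

Lemma arc_eventually S : arc S ->
  (exists M, forall x, M < x -> S (Some x)) \/ (exists M, forall x, M < x -> ~ S (Some x)).
Proof. intros [[_ Hc]|[_ Hc]].
  - apply conv_eventually; auto.
  - destruct (conv_eventually _ Hc) as [[M H]|[M H]].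
    + right. exists M; auto.
    + left. exists M. intros x Hx. apply NNPP. auto. Qed.

Lemma fin_eventually (I : nat -> P1 -> Prop) n : (forall i, (i < n)%nat -> arc (I i)) ->
  exists M, forall i, (i < n)%nat ->
   (forall x, M < x -> I i (Some x)) \/ (forall x, M < x -> ~ I i (Some x)).
Proof. induction n as [|n IH]; intros Ha.
  - exists 0. intros; lia.
  - destruct IH as [M HM]. intros; apply Ha; lia.
    destruct (arc_eventually (I n) (Ha n ltac:(lia))) as [[M' H]|[M' H]].
    + exists (Rmax M M'). intros i Hi. destruct (Nat.eq_dec i n) as [->|Hn].
      * left. intros x Hx. apply H. pose proof (Rmax_r M M'). lra.
      * destruct (HM i ltac:(lia)) as [H1|H1]; [left|right]; intros x Hx; apply H1;
        pose proof (Rmax_l M M'); lra.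
    + exists (Rmax M M'). intros i Hi. destruct (Nat.eq_dec i n) as [->|Hn].
      * right. intros x Hx. apply H. pose proof (Rmax_r M M'). lra.
      * destruct (HM i ltac:(lia)) as [H1|H1]; [left|right]; intros x Hx; apply H1;
        pose proof (Rmax_l M M'); lra.
Qed.

Lemma mob_c0_far a b c d M (g : P1 -> P1) :
  a * d - b * c = 1 -> g None = None -> p1_continuous g ->
  (forall x, M < x -> g (Some x) = mob a b c d (Some x)) -> c = 0.
Proof. intros Hdet Hg0 Hcont Hg. apply NNPP. intros Hc.
  assert (Hac : 0 < Rabs c) by (apply Rabs_pos_lt; auto).
  set (K := Rabs (a / c) + 2).
  assert (HK : 0 < K) by (unfold K; pose proof (Rabs_pos (a/c)); lra).
  destruct (Hcont None (/ K) ltac:(apply Rinv_0_lt_compat; lra)) as [dl [Hdl Hq]].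
  set (x := Rmax M (/ dl) + (Rabs d + / Rabs c) / Rabs c + 1).
  pose proof (Rmax_l M (/ dl)). pose proof (Rmax_r M (/ dl)).
  assert (Hpos : 0 <= (Rabs d + / Rabs c) / Rabs c).
  { apply Rmult_le_pos. pose proof (Rabs_pos d). pose proof (Rinv_0_lt_compat _ Hac). lra.
    left. apply Rinv_0_lt_compat; auto. }
  assert (Hidl : 0 < / dl) by (apply Rinv_0_lt_compat; auto).
  assert (Hxp : 0 < x) by (unfold x; lra).
  assert (Hx1 : (Rabs d + / Rabs c) / Rabs c <= x) by (unfold x; lra).
  set (u := c * x + d).
  assert (Hu : / Rabs c <= Rabs u).
  { unfold u. pose proof (Rabs_triang (c*x+d) (-d)). replace (c*x+d + -d) with (c*x) in H1 by ring.
    rewrite Rabs_mult, Rabs_Ropp, (Rabs_right x) in H1 by lra.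
    apply Rmult_le_compat_l with (r := Rabs c) in Hx1; [|lra].
    replace (Rabs c * ((Rabs d + / Rabs c) / Rabs c)) with (Rabs d + / Rabs c) in Hx1 by (field; lra).
    lra. }
  assert (Hu0 : u <> 0). { intros Hz. rewrite Hz, Rabs_R0 in Hu. pose proof (Rinv_0_lt_compat _ Hac). lra. }
  assert (Hcu : 1 <= Rabs (c * u)).
  { rewrite Rabs_mult. apply Rmult_le_compat_l with (r := Rabs c) in Hu; [|lra].
    rewrite Rinv_r in Hu; lra. }
  specialize (Hq (Some x)). rewrite Hg0, Hg in Hq by (unfold x; lra). simpl in Hq.
  fold u in Hq. destruct (Req_dec_T u 0) as [e|_]; [contradiction|].
  assert (Hn : nbhd None dl (Some x)).
  { simpl. rewrite Rabs_right by lra. unfold x. lra. }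
  specialize (Hq Hn). rewrite Rinv_inv in Hq.
  assert (Heq : (a * x + b) / u = a / c - / (c * u)).
  { unfold u in *. field_simplify_eq; try (split; auto); try nra; auto. }
  rewrite Heq in Hq.
  pose proof (Rabs_triang (a/c) (- / (c*u))). rewrite Rabs_Ropp in H1.
  assert (Rabs (/ (c*u)) <= 1).
  { rewrite Rabs_inv. rewrite <- Rinv_1. apply Rinv_le_contravar; lra. }
  unfold K in Hq. unfold Rminus in Hq. lra.
Qed.

Lemma germ A g : subring A -> H_ A g ->
  exists a s M, unit A a /\ A s /\ forall x, M < x -> g (Some x) = Some (a*a*x + s).
Proof. intros HA [[Hh [n [I [a [b [c [d [Hp [Hdisj Hcov]]]]]]]]] Hinf].
  destruct (fin_eventually I n) as [M HM]. intros i Hi; apply (Hp i Hi).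
  destruct (Hcov (Some (M+1))) as [i [Hi HIi]].
  destruct (HM i Hi) as [Hin|Hout]; [|exfalso; apply (Hout (M+1)); auto; lra].
  destruct (Hp i Hi) as [_ [Hsl [Hpc _]]].
  destruct Hh as [g' [_ [_ [Hcont _]]]].
  assert (Hg : forall x, M < x -> g (Some x) = mob (a i) (b i) (c i) (d i) (Some x)).
  { intros x Hx. apply Hpc. apply Hin; auto. }
  destruct Hsl as (Ha & Hb & Hc & Hd & Hdet).
  assert (Hc0 := mob_c0_far _ _ _ _ M g Hdet Hinf Hcont Hg).
  rewrite Hc0 in Hdet. rewrite Rmult_0_r, Rminus_0_r in Hdet.
  assert (Ha0 : a i <> 0) by (intros H0; rewrite H0 in Hdet; lra).
  assert (Hdi : d i = / a i) by (field_simplify_eq; auto; lra).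
  destruct HA as (H0 & H1 & Hpl & Hn & Hm).
  exists (a i), (a i * b i), M. split; [|split].
  - split; [auto|split; auto]. rewrite <- Hdi; auto.
  - apply Hm; auto.
  - intros x Hx. rewrite Hg by auto. simpl. rewrite Hc0.
    destruct (Req_dec_T (0 * x + d i) 0) as [e|_]. rewrite Hdi in e. exfalso.
    pose proof (Rinv_neq_0_compat _ Ha0). lra.
    f_equal. rewrite Hdi. field. auto.
Qed.

Lemma H_inj A g : H_ A g -> forall p q, g p = g q -> p = q.
Proof. intros [[[g' [Hl _]] _] _] p q H. rewrite <- (Hl p), <- (Hl q), H. reflexivity. Qed.

Lemma conj_pt (g : P1 -> P1) ag s M a' t' :
  (forall p q, g p = g q -> p = q) -> g None = None ->
  (forall x, M < x -> g (Some x) = Some (ag*ag*x + s)) -> a' <> 0 -> ag <> 0 ->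
  (forall y, p0 <= y <= q0 -> M < a'*a'*(y+t')) ->
  forall p, phi (ag*a') (t' + s/((ag*a')*(ag*a'))) (g p) = g (phi a' t' p).
Proof. intros Hinj Hg0 Hg Ha' Hag Hfar [x|]; [|simpl; rewrite Hg0; reflexivity].
  set (a := ag*a'). set (t := t' + s/(a*a)).
  assert (Ha : a <> 0) by (unfold a; apply Rmult_integral_contrapositive; auto).
  set (y' := x/(a'*a') - t').
  assert (Hx : x = a'*a'*(y' + t')) by (unfold y'; field; auto).
  destruct (classic (p0 <= y' <= q0)) as [Hin|Hout].
  - assert (HM := Hfar y' Hin). rewrite <- Hx in HM. rewrite (Hg x HM).
    simpl. unfold Phi at 2. fold y'. rewrite bump_in by auto.
    pose proof (bump_in_range y' Hin) as Hr. pose proof (Hfar _ Hr) as HM2.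
    rewrite Hg by auto. f_equal. unfold Phi.
    replace ((ag*ag*x + s)/(a*a) - t) with y'.
    + rewrite bump_in by auto. unfold t, a. field. pose proof p0_pos. repeat split; auto; lra.
    + unfold t, a. rewrite Hx. field. auto.
  - simpl phi at 2. rewrite Phi_out by auto.
    destruct (g (Some x)) as [z|] eqn:Hgx; [|reflexivity].
    simpl. f_equal. apply Phi_out; auto. intros Hz.
    set (yz := z/(a*a) - t) in Hz.
    pose proof (Hfar yz Hz) as HM.
    assert (g (Some (a'*a'*(yz + t'))) = Some z).
    { rewrite Hg by auto. f_equal. unfold yz, t, a. field. auto. }
    rewrite <- Hgx in H. apply Hinj in H. injection H. intros Hxe.
    apply Hout. unfold y'. rewrite <- Hxe.
    replace (a' * a' * (yz + t') / (a' * a') - t') with yz by (field; auto). auto.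
Qed.

Lemma conj_phi_iff A g E ag s M a t : H_ A g -> ag <> 0 ->
  (forall x, M < x -> g (Some x) = Some (ag*ag*x + s)) -> a <> 0 ->
  (forall y, p0 <= y <= q0 -> ag*ag*M + s < a*a*(y+t)) ->
  (conj_set g E (phi a t) <-> E (phi (/ ag * a) (t - s/(a*a)))).
Proof. intros Hh Hag Hg Ha Hfar.
  assert (Hinj := H_inj A g Hh). assert (Hg0 : g None = None) by (destruct Hh; auto).
  assert (Ha' : / ag * a <> 0) by (apply Rmult_integral_contrapositive; split; auto; apply Rinv_neq_0_compat; auto).
  assert (Hfar' : forall y, p0 <= y <= q0 -> M < (/ag*a)*(/ag*a)*(y + (t - s/(a*a)))).
  { intros y Hy. specialize (Hfar y Hy).
    replace ((/ag*a)*(/ag*a)*(y + (t - s/(a*a)))) with ((a*a*(y+t) - s)/(ag*ag)) by (field; auto).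
    assert (0 < ag*ag) by nra.
    apply Rmult_lt_reg_l with (ag*ag); auto. unfold Rdiv. field_simplify; nra. }
  pose proof (conj_pt g ag s M _ _ Hinj Hg0 Hg Ha' Hag Hfar') as Hc.
  replace (ag * (/ ag * a)) with a in Hc by (field; auto).
  replace (t - s / (a * a) + s / (a * a)) with t in Hc by ring.
  split.
  - intros [k [Ek Hk]]. replace (phi (/ ag * a) (t - s / (a * a))) with k; auto.
    apply functional_extensionality. intros p. apply Hinj. rewrite <- Hk, Hc. reflexivity.
  - intros HE. exists (phi (/ ag * a) (t - s / (a * a))). split; auto.
Qed.

Lemma Rabs_le_inv a b : Rabs a <= b -> - b <= a <= b.
Proof. unfold Rabs; destruct Rcase_abs; lra. Qed.

Fixpoint sumN (n : nat) (f : nat -> R) : R :=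
  match n with O => 0 | S n => sumN n f + f n end.

Lemma sumN_le n f g : (forall k, (k < n)%nat -> f k <= g k) -> sumN n f <= sumN n g.
Proof. induction n; simpl; intros H. lra. pose proof (H n ltac:(lia)).
  assert (sumN n f <= sumN n g) by (apply IHn; intros; apply H; lia). lra. Qed.
Lemma sumN_plus n f g : sumN n (fun k => f k + g k) = sumN n f + sumN n g.
Proof. induction n; simpl. lra. rewrite IHn. lra. Qed.
Lemma sumN_const n c : sumN n (fun _ => c) = INR n * c.
Proof. induction n. simpl. lra. change (sumN (S n) (fun _ => c)) with (sumN n (fun _ => c) + c). rewrite IHn, S_INR. lra. Qed.
Lemma sumN_shift n f : sumN n (fun k => f (S k)) - sumN n f = f n - f O.
Proof. induction n; simpl. lra. lra. Qed.
Lemma sumN_abs n f g eps : (forall k, (k < n)%nat -> Rabs (f k - g k) <= eps) ->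
  Rabs (sumN n f - sumN n g) <= INR n * eps.
Proof. intros H.
  assert (H1 : sumN n f <= sumN n (fun k => g k + eps)).
  { apply sumN_le. intros k Hk. specialize (H k Hk). apply Rabs_le_inv in H. lra. }
  assert (H2 : sumN n (fun k => g k + - eps) <= sumN n f).
  { apply sumN_le. intros k Hk. specialize (H k Hk). apply Rabs_le_inv in H. lra. }
  rewrite sumN_plus, sumN_const in H1, H2. apply Rabs_le. lra. Qed.

Section Box.
Variable X : Type.
Variable op : X -> X -> X.
Variable e : X.

Fixpoint pw (k : nat) (c : X) : X := match k with O => e | S k => op c (pw k c) end.

Fixpoint box (cs : list X) (N : nat) (f : X -> R) : R :=
  match cs with
  | nil => f e
  | c :: cs => sumN (S N) (fun k => box cs N (fun x => f (op (pw k c) x))) / INR (S N)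
  end.

Fixpoint elems (cs : list X) (N : nat) : list X :=
  match cs with
  | nil => [e]
  | c :: cs => flat_map (fun k => map (op (pw k c)) (elems cs N)) (seq 0 (S N))
  end.

Lemma elems_cons c cs N x : In x (elems (c :: cs) N) <->
  exists k x', (k < S N)%nat /\ In x' (elems cs N) /\ x = op (pw k c) x'.
Proof. change (elems (c :: cs) N) with (flat_map (fun k => map (op (pw k c)) (elems cs N)) (seq 0 (S N))). rewrite in_flat_map. split.
  - intros [k [Hk Hx]]. apply in_seq in Hk. apply in_map_iff in Hx. destruct Hx as [x' [<- Hx']].
    exists k, x'. repeat split; auto; lia.
  - intros [k [x' [Hk [Hx' ->]]]]. exists k. split. apply in_seq. lia. apply in_map. auto. Qed.

Lemma box_cons c cs N f : box (c :: cs) N f =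
  sumN (S N) (fun k => box cs N (fun x => f (op (pw k c) x))) / INR (S N).
Proof. reflexivity. Qed.
Lemma box_nil N f : box nil N f = f e.
Proof. reflexivity. Qed.

Lemma INRS_pos N : 0 < INR (S N).
Proof. apply lt_0_INR. lia. Qed.

Lemma box_close cs N f g eps : (forall x, In x (elems cs N) -> Rabs (f x - g x) <= eps) ->
  Rabs (box cs N f - box cs N g) <= eps.
Proof. revert f g. induction cs as [|c cs IH]; intros f g H; [rewrite !box_nil|rewrite !box_cons].
  - apply H. simpl; auto.
  - pose proof (INRS_pos N).
    unfold Rdiv. rewrite <- Rmult_minus_distr_r. rewrite Rabs_mult, Rabs_inv, (Rabs_right (INR (S N))) by lra.
    apply Rmult_le_reg_r with (INR (S N)); auto. rewrite Rmult_assoc, Rinv_l by lra. rewrite Rmult_1_r.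
    rewrite Rmult_comm. apply sumN_abs. intros k Hk. apply IH. intros x Hx. apply H.
    apply elems_cons. exists k, x. auto.
Qed.

Lemma box_ext cs N f g : (forall x, In x (elems cs N) -> f x = g x) -> box cs N f = box cs N g.
Proof. intros H. assert (H0 : Rabs (box cs N f - box cs N g) <= 0).
  { apply box_close. intros x Hx. rewrite H by auto. rewrite Rminus_diag, Rabs_R0. lra. }
  apply Rabs_le_inv in H0. lra.
Qed.

Lemma box_range cs N f lo hi : (forall x, lo <= f x <= hi) -> lo <= box cs N f <= hi.
Proof. revert f. induction cs as [|c cs IH]; intros f H; [rewrite box_nil; apply H|rewrite box_cons].
  pose proof (INRS_pos N).
  assert (H1 : sumN (S N) (fun _ => lo) <= sumN (S N) (fun k => box cs N (fun x => f (op (pw k c) x)))).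
  { apply sumN_le. intros k _. apply IH. intros; apply H. }
  assert (H2 : sumN (S N) (fun k => box cs N (fun x => f (op (pw k c) x))) <= sumN (S N) (fun _ => hi)).
  { apply sumN_le. intros k _. apply IH. intros; apply H. }
  rewrite sumN_const in H1, H2. split.
  - apply Rmult_le_reg_r with (INR (S N)); auto. unfold Rdiv. rewrite Rmult_assoc, Rinv_l by lra. lra.
  - apply Rmult_le_reg_r with (INR (S N)); auto. unfold Rdiv. rewrite Rmult_assoc, Rinv_l by lra. lra.
Qed.

Lemma box_plus cs N f g : box cs N (fun x => f x + g x) = box cs N f + box cs N g.
Proof. revert f g. induction cs as [|c cs IH]; intros f g; [reflexivity|rewrite !box_cons].
  unfold Rdiv. rewrite <- Rmult_plus_distr_r. rewrite <- sumN_plus. f_equal.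
  f_equal. apply functional_extensionality. intros k. apply IH. Qed.

Lemma box_const cs N c : box cs N (fun _ => c) = c.
Proof. induction cs as [|d cs IH]. reflexivity. rewrite box_cons.
  replace (fun k : nat => box cs N (fun _ : X => c)) with (fun _ : nat => c)
   by (apply functional_extensionality; intros; symmetry; apply IH).
  rewrite sumN_const. field. pose proof (INRS_pos N). lra. Qed.

Hypothesis Hassoc : forall u v w, op u (op v w) = op (op u v) w.
Hypothesis Hcomm : forall u v, op u v = op v u.

Lemma box_shift cs N c f : In c cs -> (forall x, 0 <= f x <= 1) ->
  Rabs (box cs N (fun x => f (op c x)) - box cs N f) <= 2 / INR (S N).
Proof. revert f. induction cs as [|d cs IH]; intros f Hin Hf; [destruct Hin|].
  pose proof (INRS_pos N).
  destruct Hin as [->|Hin].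
  - rewrite !box_cons.
    set (B := fun k => box cs N (fun x => f (op (pw k c) x))).
    replace (fun k => box cs N (fun x => f (op c (op (pw k c) x)))) with (fun k => B (S k)).
    2:{ apply functional_extensionality. intros k. unfold B. f_equal. apply functional_extensionality.
        intros x. simpl. rewrite Hassoc. reflexivity. }
    unfold Rdiv. rewrite <- Rmult_minus_distr_r. fold B. rewrite sumN_shift.
    assert (0 <= B (S N) <= 1) by (apply box_range; auto).
    assert (0 <= B O <= 1) by (apply box_range; auto).
    rewrite Rabs_mult, Rabs_inv, (Rabs_right (INR (S N))) by lra.
    apply Rmult_le_compat_r. left; apply Rinv_0_lt_compat; auto.
    apply Rabs_le. lra.
  - rewrite !box_cons.
    replace (fun k => box cs N (fun x => f (op c (op (pw k d) x))))
      with (fun k => box cs N (fun x => (fun y => f (op (pw k d) y)) (op c x))).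
    2:{ apply functional_extensionality. intros k. f_equal. apply functional_extensionality.
        intros x. rewrite !Hassoc, (Hcomm c). reflexivity. }
    unfold Rdiv. rewrite <- Rmult_minus_distr_r.
    rewrite Rabs_mult, Rabs_inv, (Rabs_right (INR (S N))) by lra.
    apply Rmult_le_reg_r with (INR (S N)); auto. rewrite Rmult_assoc, Rinv_l by lra. rewrite Rmult_1_r.
    replace (2 * / INR (S N) * INR (S N)) with (INR (S N) * (2 / INR (S N))) by (unfold Rdiv; ring).
    apply sumN_abs. intros k _. apply (IH (fun y => f (op (pw k d) y))); auto.
Qed.

End Box.

Lemma ultra_ext (I : Type) (F : (I -> Prop) -> Prop) :
  F (fun _ => True) -> (forall P Q, F P -> F Q -> F (fun i => P i /\ Q i)) ->
  (forall P Q : I -> Prop, (forall i, P i -> Q i) -> F P -> F Q) -> ~ F (fun _ => False) ->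
  exists U : (I -> Prop) -> Prop, (forall P, F P -> U P) /\
    (forall P Q, U P -> U Q -> U (fun i => P i /\ Q i)) /\
    (forall P Q : I -> Prop, (forall i, P i -> Q i) -> U P -> U Q) /\
    ~ U (fun _ => False) /\ (forall P, U P \/ U (fun i => ~ P i)).
Proof. intros HT HI HS H0.
  assert (HF : filter.ProperFilter F).
  { constructor. exact H0. constructor. exact HT. intros P Q. apply HI. intros P Q HPQ. apply HS. exact HPQ. }
  destruct (@filter.ultraFilterLemma I F HF) as [G [HU HFG]].
  exists G. split; [exact HFG|].
  pose proof (@filter.ultra_proper _ _ HU) as HGp.
  pose proof (@filter.filter_filter _ _ HGp) as HGf.
  split; [|split; [|split]].
  - intros P Q. apply (@filter.filterI _ _ HGf).
  - intros P Q HPQ. apply (@filter.filterS _ _ HGf). exact HPQ.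
  - apply (@filter.filter_not_empty _ _ HGp).
  - intros P. exact (@filter.in_ultra_setVsetC I G P HU).
Qed.

Section ULim.
Variable I : Type.
Variable U : (I -> Prop) -> Prop.
Hypothesis UI : forall P Q, U P -> U Q -> U (fun i => P i /\ Q i).
Hypothesis US : forall P Q : I -> Prop, (forall i, P i -> Q i) -> U P -> U Q.
Hypothesis U0 : ~ U (fun _ => False).
Hypothesis UU : forall P, U P \/ U (fun i => ~ P i).

Lemma UT : U (fun _ => True).
Proof. destruct (UU (fun _ => True)) as [H|H]; auto. exfalso. apply U0. apply (US _ _ (fun (i : I) (h : ~ True) => h Logic.I) H). Qed.

Lemma U_ne P : U P -> exists i, P i.
Proof. intros H. apply NNPP. intros Hn. apply U0. apply (US P); auto. intros i Hi. apply Hn. exists i; auto. Qed.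

Definition ulim (x : I -> R) (r : R) := forall eps, 0 < eps -> U (fun i => Rabs (x i - r) < eps).

Lemma ulim_ex x : (forall i, 0 <= x i <= 1) -> exists r, ulim x r.
Proof. intros Hx.
  set (E := fun r => U (fun i => r <= x i)).
  assert (HE0 : E 0) by (apply (US (fun _ => True)); [intros i _; apply Hx|apply UT]).
  assert (Hb : bound E).
  { exists 1. intros r Hr. destruct (Rle_dec r 1) as [|n]; auto. exfalso. apply U0.
    revert Hr. apply US. intros i h. pose proof (Hx i). lra. }
  destruct (completeness E Hb (ex_intro _ 0 HE0)) as [l [Hub Hlub]].
  exists l. intros eps Heps.
  assert (HA : U (fun i => l - eps < x i)).
  { apply NNPP. intros Hn.
    assert (forall r, E r -> r <= l - eps).
    { intros r Hr. destruct (Rle_dec r (l - eps)) as [|n]; auto. exfalso. apply Hn.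
      revert Hr. apply US. intros i h. lra. }
    specialize (Hlub (l - eps) H). lra. }
  assert (HB : U (fun i => x i < l + eps)).
  { destruct (UU (fun i => x i < l + eps)) as [H|H]; auto.
    assert (E (l + eps)). { revert H. apply US. intros i h. lra. }
    specialize (Hub _ H0). lra. }
  generalize (UI _ _ HA HB). apply US. intros i [h1 h2]. apply Rabs_def1; lra.
Qed.

Lemma ulim_close x y r s : ulim x r -> ulim y s ->
  (forall eps, 0 < eps -> U (fun i => Rabs (x i - y i) < eps)) -> r = s.
Proof. intros Hr Hs Hxy. apply NNPP. intros Hne.
  set (eps := Rabs (r - s) / 4).
  assert (Heps : 0 < eps) by (unfold eps; apply Rdiv_lt_0_compat; [apply Rabs_pos_lt; lra|lra]).
  destruct (U_ne _ (UI _ _ (Hr eps Heps) (UI _ _ (Hs eps Heps) (Hxy eps Heps)))) as [i [H1 [H2 H3]]].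
  assert (Rabs (r - s) < 3 * eps).
  { replace (r - s) with (-(x i - r) + (y i - s) + (x i - y i)) by ring.
    eapply Rle_lt_trans. apply Rabs_triang. eapply Rle_lt_trans. apply Rplus_le_compat_r. apply Rabs_triang.
    rewrite Rabs_Ropp. lra. }
  unfold eps in H. pose proof (Rabs_pos (r - s)). lra. Qed.

Lemma ulim_plus x y r s : ulim x r -> ulim y s -> ulim (fun i => x i + y i) (r + s).
Proof. intros Hr Hs eps Heps.
  generalize (UI _ _ (Hr (eps/2) ltac:(lra)) (Hs (eps/2) ltac:(lra))). apply US. intros i [h1 h2].
  replace (x i + y i - (r + s)) with ((x i - r) + (y i - s)) by ring.
  eapply Rle_lt_trans; [apply Rabs_triang|lra].
Qed.

Lemma ulim_nonneg x r : (forall i, 0 <= x i) -> ulim x r -> 0 <= r.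
Proof. intros Hx Hr. destruct (Rle_dec 0 r) as [|n]; auto. exfalso.
  destruct (U_ne _ (Hr (- r / 2) ltac:(lra))) as [i Hi]. pose proof (Hx i).
  apply Rabs_def2 in Hi. lra. Qed.

Lemma ulim_ev x c : U (fun i => x i = c) -> ulim x c.
Proof. intros H eps Heps. revert H. apply US. intros i h. rewrite h, Rminus_diag, Rabs_R0; lra. Qed.

End ULim.

Definition boxA := box R Rplus 0.
Definition elemsA := elems R Rplus 0.
Definition boxM := box R Rmult 1.
Definition elemsM := elems R Rmult 1.

Definition sumabs (l : list R) := fold_right (fun c acc => Rabs c + acc) 0 l.
Definition sinv (l : list R) := fold_right (fun a acc => / (a*a) + acc) 0 l.

Lemma pwA k c : pw R Rplus 0 k c = INR k * c.
Proof. induction k; simpl pw. simpl; ring. rewrite IHk, S_INR. ring. Qed.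

Lemma sumabs_pos l : 0 <= sumabs l.
Proof. induction l; simpl. lra. pose proof (Rabs_pos a). lra. Qed.

Lemma elemsA_bound cs N x : In x (elemsA cs N) -> Rabs x <= INR N * sumabs cs.
Proof. revert x. induction cs as [|c cs IH]; intros x Hx.
  - destruct Hx as [<-|[]]. rewrite Rabs_R0. simpl. lra.
  - apply elems_cons in Hx. destruct Hx as [k [x' [Hk [Hx' ->]]]].
    rewrite pwA. specialize (IH x' Hx'). simpl sumabs.
    eapply Rle_trans. apply Rabs_triang. rewrite Rabs_mult, (Rabs_right (INR k)) by (apply Rle_ge, pos_INR).
    assert (INR k <= INR N) by (apply le_INR; lia).
    pose proof (Rabs_pos c). nra. Qed.

Lemma elemsA_in A cs N x : subring A -> (forall c, In c cs -> A c) -> In x (elemsA cs N) -> A x.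
Proof. intros HA. pose proof HA as (H0 & H1 & Hp & Hn & Hm). revert x. induction cs as [|c cs IH]; intros x Hc Hx.
  - destruct Hx as [<-|[]]. auto.
  - apply elems_cons in Hx. destruct Hx as [k [x' [Hk [Hx' ->]]]].
    apply Hp; [|apply IH; auto; intros; apply Hc; simpl; auto].
    assert (Ac : A c) by (apply Hc; simpl; auto).
    clear -Ac H0 Hp. induction k; simpl pw; auto. Qed.

Lemma unit_mul A a b : subring A -> unit A a -> unit A b -> unit A (a * b).
Proof. intros (H0 & H1 & Hp & Hn & Hm) (Ha & Hai & Ha0) (Hb & Hbi & Hb0).
  split; [auto|split]. rewrite Rinv_mult. auto. apply Rmult_integral_contrapositive; auto. Qed.
Lemma unit_one A : subring A -> unit A 1.
Proof. intros (H0 & H1 & _). split; [auto|]. rewrite Rinv_1. split; [auto|lra]. Qed.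

Lemma elemsM_unit A cs N x : subring A -> (forall c, In c cs -> unit A c) -> In x (elemsM cs N) -> unit A x.
Proof. intros HA. revert x. induction cs as [|c cs IH]; intros x Hc Hx.
  - destruct Hx as [<-|[]]. apply unit_one; auto.
  - apply elems_cons in Hx. destruct Hx as [k [x' [Hk [Hx' ->]]]].
    apply unit_mul; auto; [|apply IH; auto; intros; apply Hc; simpl; auto].
    assert (Ac : unit A c) by (apply Hc; simpl; auto).
    clear -Ac HA. induction k; simpl pw. apply unit_one; auto. apply unit_mul; auto. Qed.

Lemma sinv_pos l : 0 <= sinv l.
Proof. induction l; simpl. lra. assert (0 <= / (a*a)).
  { destruct (Req_dec a 0). subst. rewrite Rmult_0_r, Rinv_0. lra. left. apply Rinv_0_lt_compat. nra. } lra. Qed.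
Lemma sinv_in a l : In a l -> / (a*a) <= sinv l.
Proof. induction l as [|b l IH]; intros H; [destruct H|]. destruct H as [->|H]; simpl.
  pose proof (sinv_pos l). lra.
  assert (0 <= / (b*b)).
  { destruct (Req_dec b 0). subst. rewrite Rmult_0_r, Rinv_0. lra. left. apply Rinv_0_lt_compat. nra. }
  specialize (IH H). lra. Qed.

Lemma INR_in A n : subring A -> A (INR n).
Proof. intros (H0 & H1 & Hp & _). induction n. simpl; auto. rewrite S_INR. auto. Qed.

Definition Ct (Sa St : list R) (N : nat) := flat_map (fun s => map (fun a => s / (a*a)) (elemsM Sa N)) St.
Definition T0 (Sa St : list R) (N : nat) :=
  INR (Z.to_nat (up (INR N * sumabs (Ct Sa St N) + INR N * sinv (elemsM Sa N)))).

Lemma T0_ge Sa St N : INR N * sumabs (Ct Sa St N) + INR N * sinv (elemsM Sa N) <= T0 Sa St N.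
Proof. unfold T0. set (r := INR N * sumabs (Ct Sa St N) + INR N * sinv (elemsM Sa N)).
  destruct (archimed r) as [H1 _].
  assert (0 <= r). { unfold r. pose proof (pos_INR N). pose proof (sumabs_pos (Ct Sa St N)). pose proof (sinv_pos (elemsM Sa N)). nra. }
  assert (0 <= up r)%Z. { apply le_IZR. lra. }
  rewrite INR_IZR_INZ. rewrite Z2Nat.id by auto. lra. Qed.

Lemma far Sa St N a t y : In a (elemsM Sa N) -> In t (elemsA (Ct Sa St N) N) -> a <> 0 ->
  p0 <= y <= q0 -> INR N < a*a*(y + (T0 Sa St N + t)).
Proof. intros Ha Ht Ha0 Hy. pose proof (T0_ge Sa St N). pose proof (elemsA_bound _ _ _ Ht).
  pose proof (sinv_in _ _ Ha). pose proof p0_pos. pose proof (pos_INR N).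
  apply Rabs_le_inv in H0.
  assert (Haa : 0 < a*a) by nra.
  assert (HT : INR N * / (a*a) <= T0 Sa St N + t) by nra.
  assert (INR N <= a*a*(T0 Sa St N + t)).
  { apply Rmult_le_compat_l with (r := a*a) in HT; [|lra].
    replace (a * a * (INR N * / (a * a))) with (INR N) in HT by (field; auto). exact HT. }
  nra. Qed.

Definition ind {T} (P : T -> Prop) (h : T) : R := if excluded_middle_informative (P h) then 1 else 0.
Definition Idx := (list R * list R * nat)%type.
Definition mu (i : Idx) (E : (P1 -> P1) -> Prop) : R :=
  let '(Sa, St, N) := i in
  boxM Sa N (fun a => boxA (Ct Sa St N) N (fun t => ind E (phi a (T0 Sa St N + t)))).

Lemma ind_range {T} (P : T -> Prop) h : 0 <= ind P h <= 1.
Proof. unfold ind. destruct excluded_middle_informative; lra. Qed.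
Lemma ind_iff {T} (P Q : T -> Prop) h h' : (P h <-> Q h') -> ind P h = ind Q h'.
Proof. intros H. unfold ind. destruct excluded_middle_informative; destruct excluded_middle_informative; tauto. Qed.

Lemma mu_range i E : 0 <= mu i E <= 1.
Proof. destruct i as [[Sa St] N]. unfold mu, boxM. apply box_range. intros a.
  unfold boxA. apply box_range. intros t. apply ind_range. Qed.

Lemma mu_add i E F : (forall h, E h -> F h -> False) ->
  mu i (fun h => E h \/ F h) = mu i E + mu i F.
Proof. intros Hd. destruct i as [[Sa St] N]. unfold mu, boxM, boxA.
  rewrite <- box_plus. f_equal. apply functional_extensionality. intros a.
  rewrite <- box_plus. f_equal. apply functional_extensionality. intros t.
  generalize (phi a (T0 Sa St N + t)). intros h.
  unfold ind; destruct (excluded_middle_informative (E h \/ F h)) as [H1|H1];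
  destruct (excluded_middle_informative (E h)) as [H2|H2];
  destruct (excluded_middle_informative (F h)) as [H3|H3]; try lra;
  try (exfalso; exact (Hd h H2 H3)); tauto. Qed.

Definition valid (A : R -> Prop) (Sa St : list R) :=
  (forall x, In x Sa -> unit A x) /\ (forall x, In x St -> A x).

Lemma Ct_in A Sa St N c : subring A -> valid A Sa St -> In c (Ct Sa St N) -> A c.
Proof. intros HA [Hsa Hst] Hc. unfold Ct in Hc. apply in_flat_map in Hc.
  destruct Hc as [s [Hs Hc]]. apply in_map_iff in Hc. destruct Hc as [a [<- Ha]].
  pose proof (elemsM_unit A Sa N a HA Hsa Ha) as (Ha1 & Ha2 & Ha3).
  pose proof HA as (H0 & H1 & Hp & Hn & Hm). unfold Rdiv. rewrite Rinv_mult. apply Hm; auto. Qed.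

Definition Dset (A : R -> Prop) := fun h => H_ A h /\ exists p, h p <> p.

Lemma mu_D A Sa St N : subring A -> valid A Sa St -> mu (Sa, St, N) (Dset A) = 1.
Proof. intros HA Hv. unfold mu, boxM, boxA.
  transitivity (box R Rmult 1 Sa N (fun _ => 1)); [|apply box_const]. apply box_ext. intros a Ha.
  transitivity (box R Rplus 0 (Ct Sa St N) N (fun _ => 1)); [|apply box_const]. apply box_ext. intros t Ht.
  unfold ind. destruct excluded_middle_informative as [|n]; auto. exfalso. apply n.
  pose proof (elemsM_unit A Sa N a HA (proj1 Hv) Ha) as Hu.
  assert (At : A (T0 Sa St N + t)).
  { pose proof HA as (H0 & H1 & Hp & Hn & Hm). apply Hp. unfold T0. apply INR_in; auto.
    apply (elemsA_in A (Ct Sa St N) N); auto. intros c Hc. apply (Ct_in A Sa St N); auto. }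
  split. apply H_phi; auto. eexists. apply phi_moves. destruct Hu as (_ & _ & ?); auto. Qed.

Lemma mu_inv A g E ag s M Sa St N : subring A -> valid A Sa St -> H_ A g -> unit A ag ->
  (forall x, M < x -> g (Some x) = Some (ag*ag*x + s)) ->
  In (/ ag) Sa -> In (- s) St -> ag*ag*M + s <= INR N ->
  Rabs (mu (Sa, St, N) (conj_set g E) - mu (Sa, St, N) E) <= 4 / INR (S N).
Proof. intros HA Hv Hg Hag Hgerm Hsa Hst HN. unfold mu, boxM, boxA.
  set (C := Ct Sa St N). set (T := T0 Sa St N).
  destruct Hag as (_ & _ & Hag0).
  set (F := fun a' => box R Rplus 0 C N (fun t => ind E (phi a' (T + t)))).
  assert (Heq : box R Rmult 1 Sa N (fun a => box R Rplus 0 C N (fun t => ind (conj_set g E) (phi a (T + t)))) =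
     box R Rmult 1 Sa N (fun a => box R Rplus 0 C N (fun t => (fun t' => ind E (phi (/ag * a) (T + t'))) ((- s)/(a*a) + t)))).
  { apply box_ext. intros a Ha. apply box_ext. intros t Ht. apply ind_iff.
    pose proof (elemsM_unit A Sa N a HA (proj1 Hv) Ha) as (_ & _ & Ha0).
    replace (T + (- s / (a * a) + t)) with (T + t - s/(a*a)) by (field; auto).
    apply (conj_phi_iff A g E ag s M a (T + t) Hg Hag0 Hgerm Ha0).
    intros y Hy. pose proof (far Sa St N a t y Ha Ht Ha0 Hy). fold T in H. lra. }
  rewrite Heq. clear Heq.
  assert (H1 : Rabs (box R Rmult 1 Sa N (fun a => box R Rplus 0 C N (fun t => (fun t' => ind E (phi (/ag * a) (T + t'))) ((- s)/(a*a) + t))) -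
                     box R Rmult 1 Sa N (fun a => F (/ag * a))) <= 2 / INR (S N)).
  { apply box_close. intros a Ha. unfold F. apply (box_shift R Rplus 0 (fun u v w => eq_sym (Rplus_assoc u v w)) Rplus_comm C N ((- s)/(a*a)) (fun t' => ind E (phi (/ ag * a) (T + t')))).
    - unfold C, Ct. apply in_flat_map. exists (- s). split; auto. apply in_map_iff. exists a. split; auto.
    - intros; apply ind_range. }
  assert (H2 : Rabs (box R Rmult 1 Sa N (fun a => F (/ag * a)) - box R Rmult 1 Sa N F) <= 2 / INR (S N)).
  { apply (box_shift R Rmult 1 (fun u v w => eq_sym (Rmult_assoc u v w)) Rmult_comm Sa N (/ ag) F); auto.
    intros a. unfold F. apply box_range. intros; apply ind_range. }
  fold F. pose proof (Rabs_triang (box R Rmult 1 Sa N (fun a => box R Rplus 0 C N (fun t => (fun t' => ind E (phi (/ag * a) (T + t'))) ((- s)/(a*a) + t))) -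
                     box R Rmult 1 Sa N (fun a => F (/ag * a))) (box R Rmult 1 Sa N (fun a => F (/ag * a)) - box R Rmult 1 Sa N F)).
  replace (4 / INR (S N)) with (2 / INR (S N) + 2 / INR (S N)) by (pose proof (INRS_pos N); field; lra).
  eapply Rle_trans; [|apply Rplus_le_compat; [exact H1|exact H2]].
  eapply Rle_trans; [|exact H]. right. f_equal. ring.
Qed.

Definition Fb (A : R -> Prop) (P : Idx -> Prop) := exists sa0 st0 n0,
  (forall x, In x sa0 -> unit A x) /\ (forall x, In x st0 -> A x) /\
  forall Sa St N, incl sa0 Sa -> incl st0 St -> (n0 <= N)%nat -> valid A Sa St -> P (Sa, St, N).

Lemma IZR_le_INR z : IZR z <= INR (Z.to_nat z).
Proof. destruct (Z_le_gt_dec 0 z).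
  - rewrite INR_IZR_INZ, Z2Nat.id by auto. lra.
  - assert (IZR z < 0) by (apply IZR_lt; lia). pose proof (pos_INR (Z.to_nat z)). lra. Qed.

Lemma nat_above r : exists n : nat, r < INR n.
Proof. exists (Z.to_nat (up r)). destruct (archimed r). pose proof (IZR_le_INR (up r)). lra. Qed.

Theorem proposition2 (A : R -> Prop) (hA : subring A) : inner_amenable (H_ A).
Proof.
  assert (FT : Fb A (fun _ => True)).
  { exists [], [], 0%nat. split; [intros ? []|split; [intros ? []|auto]]. }
  assert (FI : forall P Q, Fb A P -> Fb A Q -> Fb A (fun i => P i /\ Q i)).
  { intros P Q [sa0 [st0 [n0 [H1 [H2 H3]]]]] [sa1 [st1 [n1 [H4 [H5 H6]]]]].
    exists (sa0 ++ sa1), (st0 ++ st1), (Nat.max n0 n1). split; [|split].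
    - intros x Hx. apply in_app_or in Hx. destruct Hx; auto.
    - intros x Hx. apply in_app_or in Hx. destruct Hx; auto.
    - intros Sa St N Hsa Hst HN Hv. split.
      + apply H3; auto; [intros x Hx; apply Hsa; apply in_or_app; auto|intros x Hx; apply Hst; apply in_or_app; auto|lia].
      + apply H6; auto; [intros x Hx; apply Hsa; apply in_or_app; auto|intros x Hx; apply Hst; apply in_or_app; auto|lia]. }
  assert (FS : forall P Q : Idx -> Prop, (forall i, P i -> Q i) -> Fb A P -> Fb A Q).
  { intros P Q HPQ [sa0 [st0 [n0 [H1 [H2 H3]]]]]. exists sa0, st0, n0. split; [|split]; auto. }
  assert (F0 : ~ Fb A (fun _ => False)).
  { intros [sa0 [st0 [n0 [H1 [H2 H3]]]]]. apply (H3 sa0 st0 n0); auto; try apply incl_refl. split; auto. }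
  destruct (ultra_ext Idx (Fb A) FT FI FS F0) as [U [HFU [UI [US [U0 UU]]]]].
  set (mf := fun E => proj1_sig (constructive_indefinite_description _
                 (ulim_ex Idx U UI US U0 UU (fun i => mu i E) (fun i => mu_range i E)))).
  assert (Hm : forall E, ulim Idx U (fun i => mu i E) (mf E)).
  { intros E. unfold mf. destruct constructive_indefinite_description; auto. }
  assert (Hrefl : forall (x : Idx -> R) eps, 0 < eps -> U (fun i => Rabs (x i - x i) < eps)).
  { intros x eps He. apply (US (fun _ => True)). intros i _. rewrite Rminus_diag, Rabs_R0; auto.
    apply UT; auto. }
  exists mf. split; [|split; [|split]].
  - intros E _. apply (ulim_nonneg Idx U US U0 (fun i => mu i E)). intros; apply mu_range. apply Hm.
  - apply (ulim_close Idx U UI US U0 (fun i => mu i (Dset A)) (fun i => mu i (Dset A))); auto.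
    apply ulim_ev; auto. apply HFU. exists [], [], 0%nat. split; [intros x []|split; [intros x []|]].
    intros Sa St N _ _ _ Hv. apply mu_D; auto.
  - intros E F _ _ Hd.
    apply (ulim_close Idx U UI US U0 (fun i => mu i (fun h => E h \/ F h)) (fun i => mu i E + mu i F)); auto.
    apply ulim_plus; auto.
    intros eps He. apply (US (fun _ => True)). intros i _. rewrite mu_add by auto. rewrite Rminus_diag, Rabs_R0; auto.
    apply UT; auto.
  - intros g E Hg _.
    destruct (germ A g hA Hg) as [ag [s [M [Hag [Hs Hgerm]]]]].
    apply (ulim_close Idx U UI US U0 (fun i => mu i (conj_set g E)) (fun i => mu i E)); auto.
    intros eps He. apply HFU.
    destruct (nat_above (ag*ag*M + s)) as [n0 Hn0].
    destruct (nat_above (4 / eps)) as [n1 Hn1].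
    exists [/ ag], [- s], (Nat.max n0 n1). split; [|split].
    + intros x [<-|[]]. destruct Hag as (Ha1 & Ha2 & Ha3). split; [auto|split].
      rewrite Rinv_inv; auto. apply Rinv_neq_0_compat; auto.
    + intros x [<-|[]]. destruct hA as (_ & _ & _ & Hn & _). auto.
    + intros Sa St N Hsa Hst HN Hv.
      assert (HN0 : INR n0 <= INR N) by (apply le_INR; lia).
      assert (HN1 : INR n1 <= INR N) by (apply le_INR; lia).
      pose proof (mu_inv A g E ag s M Sa St N hA Hv Hg Hag Hgerm
                   (Hsa _ (or_introl eq_refl)) (Hst _ (or_introl eq_refl)) ltac:(lra)).
      eapply Rle_lt_trans; [exact H|].
      rewrite S_INR. pose proof (pos_INR N).
      apply Rmult_lt_reg_r with (INR N + 1); [lra|].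
      unfold Rdiv. rewrite Rmult_assoc, Rinv_l by lra. rewrite Rmult_1_r.
      apply Rmult_lt_reg_l with (/ eps). apply Rinv_0_lt_compat; auto.
      rewrite <- Rmult_assoc, Rinv_l by lra. unfold Rdiv in Hn1. lra.
Qed.
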